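(* Let $G$ be a connected graph on $n$ nodes. Let $v_1,\dots,v_\ell\in\mathbb R^n$ and $\lambda_1,\dots,\lambda_\ell\ge0$ with $\sum_i\lambda_i=1$, and put $v=\sum_{i=1}^\ell\lambda_iv_i$. Let $v(t)$ denote the state of the averaging process started from $v$, and $v_i(t)$ the state of the process started from $v_i$; let $\bar v$ and $\bar v_i$ be the corresponding constant vectors of averages. Then for every $t\ge0$, $$\mathbb E\|v(t)-\bar v\|_1\;\le\;\sum_{i=1}^\ell\lambda_i\,\mathbb E\|v_i(t)-\bar v_i\|_1 .$$
   Context: The averaging process on a finite, undirected, connected graph $G=(V,E)$, $V=\{1,\dots,n\}$: the state vector $v(t)\in\mathbb R^n$, $t=0,1,2,\dots$, starts from a given $v(0)$; at each step $t\ge 1$ an edge $\{i,j\}\in E$ is chosen uniformly at random (independently of all previous choices) and both $v_i$ and $v_j$ are replaced by $(v_i+v_j)/2$, all other coordinates unchanged. For an initial vector $w$, its constant vector of averages is $\bar w=(a,\dots,a)^T$ with $a=\frac1n\sum_j w_j$. *)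

(* Defs.v *)
From mathcomp Require Import all_boot all_order all_algebra.
Set Implicit Arguments. Unset Strict Implicit. Unset Printing Implicit Defensive.
Import Order.TTheory GRing.Theory Num.Theory.
Local Open Scope ring_scope.

Definition simple_graph (n : nat) (adj : rel 'I_n) : Prop :=
  irreflexive adj /\ symmetric adj.
Definition connected_graph (n : nat) (adj : rel 'I_n) : Prop :=
  forall i j : 'I_n, connect adj i j.

(* Edge set E: each undirected edge {i,j} represented once as (i,j), i < j. *)
Definition edges (n : nat) (adj : rel 'I_n) : {set 'I_n * 'I_n} :=
  [set p : 'I_n * 'I_n | (val p.1 < val p.2)%N && adj p.1 p.2].

Definition avg_step (R : realFieldType) (n : nat) (e : 'I_n * 'I_n)
  (v : 'I_n -> R) : 'I_n -> R :=
  fun k => if (k == e.1) || (k == e.2) then (v e.1 + v e.2) / 2 else v k.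

Definition run (R : realFieldType) (n : nat) (v : 'I_n -> R)
  (s : seq ('I_n * 'I_n)) : 'I_n -> R :=
  foldl (fun w e => avg_step e w) v s.

Definition avgvec (R : realFieldType) (n : nat) (w : 'I_n -> R) : 'I_n -> R :=
  fun _ => (\sum_j w j) / n%:R.

Definition norm1 (R : realFieldType) (n : nat) (w : 'I_n -> R) : R :=
  \sum_k `|w k|.

(* Expectation of F(v(t)) where v(t) is the state of the averaging process
   after t steps started from v: the t edges are i.i.d. uniform on E, so the
   law of the edge sequence is uniform on E^t. *)
Definition expect_at (R : realFieldType) (n : nat) (adj : rel 'I_n) (t : nat)
  (v : 'I_n -> R) (F : ('I_n -> R) -> R) : R :=
  ((#|edges adj| ^ t)%:R)^-1 *
  \sum_(s : t.-tuple ('I_n * 'I_n) | all (mem (edges adj)) s) F (run v s).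

(* Main.v *)
Require Import Defs.
From mathcomp Require Import all_boot all_order all_algebra.
Import Order.TTheory GRing.Theory Num.Theory.
Local Open Scope ring_scope.

Lemma run_lin_gen (R : realFieldType) (n l : nat) (lam : 'I_l -> R) s :
  forall (vs : 'I_l -> 'I_n -> R) (w : 'I_n -> R),
  (forall k, w k = \sum_i lam i * vs i k) ->
  forall k, run w s k = \sum_i lam i * run (vs i) s k.
Proof.
elim: s => [|e s IH] vs w Hw k; first exact: Hw.
rewrite /run /=.
apply: (IH (fun i => avg_step e (vs i))) => j.
rewrite /avg_step; case: ifP => _; last exact: Hw.
rewrite !Hw -big_split /= mulr_suml; apply: eq_bigr => i _.
by rewrite -mulrDr mulrA.
Qed.

Lemma run_lin (R : realFieldType) (n l : nat) (lam : 'I_l -> R) s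
  (vs : 'I_l -> 'I_n -> R) k :
  run (fun k => \sum_i lam i * vs i k) s k = \sum_i lam i * run (vs i) s k.
Proof. exact: run_lin_gen. Qed.

Theorem proposition2 (R : realFieldType) (n : nat) (adj : rel 'I_n)
  (Hg : simple_graph adj) (Hc : connected_graph adj)
  (l : nat) (vs : 'I_l -> 'I_n -> R) (lam : 'I_l -> R)
  (Hlam0 : forall i, 0 <= lam i) (Hlam1 : \sum_i lam i = 1) (t : nat) :
  let v : 'I_n -> R := fun k => \sum_i lam i * vs i k in
  expect_at adj t v (fun w => norm1 (fun k => w k - avgvec v k))
  <= \sum_i lam i *
       expect_at adj t (vs i) (fun w => norm1 (fun k => w k - avgvec (vs i) k)).
Proof.
pose v : 'I_n -> R := fun k => \sum_i lam i * vs i k.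
change (expect_at adj t v (fun w => norm1 (fun k => w k - avgvec v k))
  <= \sum_i lam i *
       expect_at adj t (vs i) (fun w => norm1 (fun k => w k - avgvec (vs i) k))).
rewrite /expect_at.
under [X in _ <= X]eq_bigr => i _ do rewrite mulrCA.
rewrite -mulr_sumr ler_wpM2l ?invr_ge0 ?ler0n //.
under [X in _ <= X]eq_bigr => i _ do rewrite mulr_sumr.
rewrite [X in _ <= X]exchange_big; apply: ler_sum => s _.
rewrite /norm1.
under [X in _ <= X]eq_bigr => i _ do rewrite mulr_sumr.
rewrite [X in _ <= X]exchange_big; apply: ler_sum => k _.
have -> : run v s k - avgvec v k
        = \sum_i lam i * (run (vs i) s k - avgvec (vs i) k).
  rewrite /v run_lin /avgvec.
  under [X in _ = X]eq_bigr => i _ do rewrite mulrBr.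
  rewrite sumrB; congr (_ - _).
  rewrite exchange_big /= mulr_suml; apply: eq_bigr => i _.
  by rewrite -mulr_sumr mulrA.
apply: le_trans (ler_norm_sum _ _ _) _.
apply: ler_sum => i _; rewrite normrM ger0_norm //.
Qed.
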